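(* Let $n\geq 2$ be an integer and $k\in\{1,\ldots,n-1\}$. Let $a_1,\ldots,a_n$ and $b_1,\ldots,b_{n-k}$ be positive real numbers such that $\max_{1\leq i\leq n}a_i\leq \min_{1\leq j\leq n-k}b_j$ and $\sum_{i=1}^{n}a_i=\sum_{j=1}^{n-k}b_j$. Then $$\sum_{i=1}^{n}a_i^2<\sum_{j=1}^{n-k}b_j^2.$$ *)

(* Defs.v *)
From mathcomp Require Import all_boot all_order all_algebra.

(* Main.v *)
Require Import Defs.
From mathcomp Require Import all_boot all_order all_algebra.
Import Order.TTheory GRing.Theory Num.Theory.
Local Open Scope ring_scope.

Theorem lemma2p1 (R : realFieldType) (n k : nat) (hn : (2 <= n)%N)
  (hk1 : (1 <= k)%N) (hk2 : (k <= n - 1)%N)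
  (a : 'I_n -> R) (b : 'I_(n - k) -> R)
  (ha : forall i, 0 < a i) (hb : forall j, 0 < b j)
  (hmaxmin : forall i j, a i <= b j)
  (hsum : \sum_(i < n) a i = \sum_(j < n - k) b j) :
  \sum_(i < n) a i ^+ 2 < \sum_(j < n - k) b j ^+ 2.
Proof.
have n0 : (0 < n)%N by apply: leq_trans hn.
have [i0 Hi0] : exists i0, forall i, a i <= a i0.
  case: (@arg_maxP _ _ 'I_n (Ordinal n0) xpredT a erefl) => i _ H.
  by exists i => j; apply: H.
set M := a i0.
have nk0 : (0 < n - k)%N by rewrite subn_gt0; apply: leq_ltn_trans hk2 _; rewrite ltn_subrL n0.
have hMb : forall j, M <= b j by move=> j; apply: hmaxmin.
have h1 : \sum_(i < n) a i ^+ 2 <= M * \sum_(i < n) a i.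
  rewrite mulr_sumr; apply: ler_sum => i _.
  by rewrite expr2 ler_pM2r ?ha ?Hi0.
have h2 : M * \sum_(j < n - k) b j <= \sum_(j < n - k) b j ^+ 2.
  rewrite mulr_sumr; apply: ler_sum => j _.
  by rewrite expr2 ler_pM2r ?hb ?hMb.
case: (boolP [exists i, a i < M]) => [/existsP [i Hi] | /existsPn Hall].
  apply: (lt_le_trans _ h2); rewrite -hsum.
  rewrite mulr_sumr (bigD1 i) //= [X in _ < X](bigD1 i) //=.
  apply: ltr_leD.
    by rewrite expr2 ltr_pM2r.
  apply: ler_sum => l _.
  by rewrite expr2 ler_pM2r ?ha ?Hi0.
have aM : forall i, a i = M.
  by move=> i; apply/le_anti; rewrite Hi0 /=; move: (Hall i); rewrite leNgt.
case: (boolP [exists j, M < b j]) => [/existsP [j Hj] | /existsPn Hallb].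
  apply: (le_lt_trans h1); rewrite hsum.
  rewrite mulr_sumr (bigD1 j) //= [X in _ < X](bigD1 j) //=.
  apply: ltr_leD.
    by rewrite expr2 ltr_pM2r.
  apply: ler_sum => l _.
  by rewrite expr2 ler_pM2r ?hb ?hMb.
have bM : forall j, b j = M.
  by move=> j; apply/le_anti; rewrite hMb andbT; move: (Hallb j); rewrite leNgt.
have M0 : M != 0 by rewrite gt_eqF // /M ha.
have sa : \sum_(i < n) a i = M * n%:R.
  by rewrite (eq_bigr (fun _ => M)); [rewrite sumr_const card_ord mulr_natr | move=> i _; apply: aM].
have sb : \sum_(j < n - k) b j = M * (n - k)%:R.
  by rewrite (eq_bigr (fun _ => M)); [rewrite sumr_const card_ord mulr_natr | move=> i _; apply: bM].
exfalso; move: hsum; rewrite sa sb => /(mulfI M0) /eqP; rewrite eqr_nat => /eqP H.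
have : (n - k < n)%N by rewrite ltn_subrL n0 andbT; apply: leq_trans hk1.
by rewrite -H ltnn.
Qed.
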